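(* Let $\ell$ be a positive integer and let $r_i=(a_i,b_i,c_i,d_i)\in\mathbb{Z}^4$, $i=1,2,3,4$, satisfy $a_ia_j+b_ib_j+c_ic_j+d_id_j=\delta_{ij}\ell$ for all $i,j\in\{1,2,3,4\}$. Let $D_i=\gcd(a_i,b_i,c_i,d_i)$ and assume $\gcd(D_1,D_2,D_3,D_4)=1$. For $1\le i<j\le 4$ let $\zeta_{ij}$ be the greatest common divisor of all $2\times2$ minors of the matrix $\begin{pmatrix} a_i & b_i & c_i & d_i\\ a_j & b_j & c_j & d_j\end{pmatrix}$. Let $H=\{\sum_{i=1}^4 s_ir_i: s_i\in[0,1]\}$ and write its Ehrhart polynomial as $E_{H}(t)=\ell^2t^4+\alpha_1t^3+\alpha_2t^2+\alpha_3t+1$. Then $$\alpha_2=\alpha_3+\delta-\Delta,$$ where $\delta=\sum_{1\le i<j\le 4}\zeta_{ij}$ and $\Delta=D_1+D_2+D_3+D_4$.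
   Context: $\delta_{ij}$ is the Kronecker delta. The Ehrhart polynomial $E_H$ is the polynomial with $E_H(t)=\#(tH\cap\mathbb{Z}^4)$ for all positive integers $t$. *)

(* Defs.v *)
From HB Require Import structures.
From mathcomp Require Import all_boot all_order all_algebra.
From mathcomp Require Import reals.
Set Implicit Arguments. Unset Strict Implicit. Unset Printing Implicit Defensive.
Import Order.TTheory GRing.Theory Num.Theory.
Local Open Scope ring_scope.

(* The four vectors r_1..r_4 are the rows r i of a 4x4 integer matrix r;
   r i k is the k-th coordinate (a_i, b_i, c_i, d_i). *)

Definition Dgcd (r : 'M[int]_4) (i : 'I_4) : int :=
  foldr gcdz 0 [seq r i k | k <- enum 'I_4].

Definition minor2 (r : 'M[int]_4) (i j k l : 'I_4) : int :=
  r i k * r j l - r i l * r j k.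

Definition zeta (r : 'M[int]_4) (i j : 'I_4) : int :=
  foldr gcdz 0 [seq minor2 r i j kl.1 kl.2 |
                kl : 'I_4 * 'I_4 <- [seq (k, l) | k <- enum 'I_4, l <- enum 'I_4]
                & (kl.1 < kl.2)%N].

Definition in_dilate (R : realType) (r : 'M[int]_4) (t : nat) (x : 'rV[int]_4) : Prop :=
  exists s : 'I_4 -> R, (forall i, 0 <= s i <= 1) /\
    forall k : 'I_4, (x ord0 k)%:~R = t%:R * \sum_(i < 4) s i * (r i k)%:~R.

Definition has_card (P : 'rV[int]_4 -> Prop) (n : nat) : Prop :=
  exists s : seq 'rV[int]_4, uniq s /\ (forall x, x \in s <-> P x) /\ size s = n.

(* Main.v *)
Require Import Defs.
From HB Require Import structures.
From mathcomp Require Import all_boot all_order all_algebra.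
From mathcomp Require Import reals.
From mathcomp Require Import ring lra.
Import Order.TTheory GRing.Theory Num.Theory.
Local Open Scope ring_scope.
Set Implicit Arguments. Unset Strict Implicit. Unset Printing Implicit Defensive.
Local Open Scope ring_scope.

Lemma big_option_split (T : finType) (F : option T -> nat) :
  (\sum_(o : option T) F o = F None + \sum_(x : T) F (Some x))%N.
Proof.
rewrite (bigD1 None) //=; congr (_ + _)%N.
rewrite (reindex_omap Some id) //=; last by case.
by apply: eq_bigl => x; rewrite eqxx.
Qed.

Lemma foldr_gcd_dvd (s : seq int) x : x \in s -> (foldr gcdz 0 s %| x)%Z.
Proof.
elim: s => //= y s IH; rewrite in_cons => /orP[/eqP->|/IH H].
  exact: dvdz_gcdl.
exact: dvdz_trans (dvdz_gcdr _ _) H.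
Qed.

Lemma foldr_gcd_greatest (s : seq int) d :
  (forall x, x \in s -> (d %| x)%Z) -> (d %| foldr gcdz 0 s)%Z.
Proof.
elim: s => [|y s IH] H /=; first exact: dvdz0.
rewrite dvdz_gcd H ?mem_head // IH // => x xs; apply: H; by rewrite in_cons xs orbT.

Qed.

Lemma foldr_gcd_ge0 (s : seq int) : 0 <= foldr gcdz 0 s.
Proof. by case: s. Qed.

Lemma foldr_gcd_mul (s : seq int) u :
  foldr gcdz 0 [seq u * x | x <- s] = `|u|%:Z * foldr gcdz 0 s.
Proof.
elim: s => [|y s IH] /=; first by rewrite mulr0.
rewrite IH.
have -> : gcdz (u*y) (`|u|%:Z * foldr gcdz 0 s) = gcdz (u*y) (u * foldr gcdz 0 s).
  by rewrite /gcdz !abszM.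
by rewrite -mulz_gcdr.
Qed.

Lemma dvdz_anti_ge0 (a b : int) : 0 <= a -> 0 <= b -> (a %| b)%Z -> (b %| a)%Z -> a = b.
Proof.
case: a => // a; case: b => // b _ _; rewrite !dvdzE /= => h1 h2.
by congr Posz; apply/eqP; rewrite eqn_dvd h1 h2.
Qed.

Local Open Scope ring_scope.

Lemma count_mult (m d : nat) : (0 < m)%N -> (\sum_(u < d * m) (m %| u : nat))%N = d.
Proof.
move=> m0; elim: d => [|d IH]; first by rewrite mul0n big_ord0.
rewrite mulSn addnC big_split_ord /= IH.
rewrite (eq_bigr (fun i : 'I_m => (i == 0%N :> nat) : nat)); last first.
  move=> i _; rewrite dvdn_addr ?dvdn_mull //.
  congr nat_of_bool; apply/idP/idP => [h|/eqP->]; last exact: dvdn0.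
  rewrite eqn0Ngt; apply/negP => ip; have := dvdn_leq ip h.
  by rewrite leqNgt ltn_ord.
clear IH; case: m m0 => // m _; rewrite big_ord_recl /= big1 ?addn0 ?addn1 //.
Qed.

Lemma count_mult' (n m d : nat) : (0 < m)%N -> n = (d * m)%N ->
  (\sum_(u < n) (m %| u : nat))%N = d.
Proof. by move=> m0 ->; exact: count_mult. Qed.

Lemma count_dvd_int (l : nat) (d : int) : (0 < l)%N -> d != 0 -> (d %| l%:Z)%Z ->
  (\sum_(u < l) (((l:int) %| (u%:Z * d)%R)%Z : nat))%N = `|d|%N.
Proof.
move=> l0 d0; rewrite dvdzE /= => /dvdnP [m hm].
have dp : (0 < `|d|)%N by rewrite absz_gt0.
have mp : (0 < m)%N by move: l0; rewrite hm muln_gt0 => /andP[].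
rewrite (eq_bigr (fun u : 'I_l => (m %| u : nat))); last first.
  move=> u _; rewrite dvdzE abszM /=.
  by rewrite [X in (X %| _)%N]hm dvdn_pmul2r.
by apply: count_mult' mp _; rewrite hm mulnC.
Qed.

Lemma shift_sum (l : nat) (f : int -> bool) : (0 < l)%N -> f l%:Z = f 0 ->
  (\sum_(u < l) (f (u%:Z + 1)%R : nat))%N = (\sum_(u < l) (f u%:Z : nat))%N.
Proof.
case: l => // l _ hf.
rewrite big_ord_recr big_ord_recl /= -hf addnC; congr (_ + _)%N.
  by rewrite -addn1 PoszD.
by apply: eq_bigr => i _; rewrite /bump /= addnC PoszD.
Qed.

Local Open Scope ring_scope.

Definition j0 : 'I_2 := ord0.
Definition j1 : 'I_2 := ord_max.

Lemma sum2 (V : zmodType) (F : 'I_2 -> V) : \sum_(j < 2) F j = F j0 + F j1.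
Proof.
rewrite !big_ord_recl big_ord0 addr0; congr (_ + F _).
exact: val_inj.
Qed.

Definition mn (X : 'M[int]_(2,4)) (k m : 'I_4) : int := X j0 k * X j1 m - X j0 m * X j1 k.
Definition cd (X : 'M[int]_(2,4)) (c : int) := forall k m, (c %| mn X k m)%Z.

Lemma mnL (L : 'M[int]_2) X k m :
  mn (L *m X) k m = (L j0 j0 * L j1 j1 - L j0 j1 * L j1 j0) * mn X k m.
Proof. rewrite /mn !mxE !sum2; ring. Qed.

Lemma mnR (X : 'M[int]_(2,4)) (V : 'M[int]_4) k m :
  mn (X *m V) k m = \sum_p \sum_q mn X p q * V p k * V q m.
Proof.
rewrite /mn !mxE [X in _ - X]mulrC mulr_suml [X in _ - X]mulr_suml -sumrB.
apply: eq_bigr => p _; rewrite mulr_sumr [X in _ - X]mulr_sumr -sumrB.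
apply: eq_bigr => q _; ring.
Qed.

Lemma cdL L X c : cd X c -> cd (L *m X) c.
Proof. by move=> h k m; rewrite mnL dvdz_mull. Qed.

Lemma cdR X V c : cd X c -> cd (X *m V) c.
Proof.
move=> h k m; rewrite mnR; apply: rpred_sum => p _; apply: rpred_sum => q _.
by rewrite -mulrA dvdz_mulr.
Qed.

Definition diagm (d : seq int) : 'M[int]_(2,4) := \matrix_(i, j) (d`_i *+ (i == j :> nat)).
Definition o0 : 'I_4 := @Ordinal 4 0 isT.
Definition o1 : 'I_4 := @Ordinal 4 1 isT.
Definition o2 : 'I_4 := @Ordinal 4 2 isT.
Definition o3 : 'I_4 := @Ordinal 4 3 isT.

Lemma cdDm d c : cd (diagm d) c <-> (c %| d`_0 * d`_1)%Z.
Proof.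
split=> [h|h k m].
  by have := h o0 o1; rewrite /mn !mxE /= mulr0 subr0 !mulr1n.
rewrite /mn !mxE; apply: rpredB; rewrite mulrnAl mulrnAr; do 2 apply: rpredMn => //.
Qed.

Definition isg (X : 'M[int]_(2,4)) (g : int) :=
  [/\ 0 <= g, cd X g & forall c, cd X c -> (c %| g)%Z].

Definition dv (l : int) n (y : 'rV[int]_n) := [forall k, (l %| y ord0 k)%Z].

Lemma dv_mul l n p (y : 'rV[int]_n) (M : 'M[int]_(n,p)) : dv l y -> dv l (y *m M).
Proof.
move=> /forallP h; apply/forallP => k; rewrite mxE; apply: rpred_sum => j _.
exact: dvdz_mulr.
Qed.

Definition row2 (a b : int) : 'rV[int]_2 := \row_j (if j == j0 then a else b).

Lemma row2_mul n a b (Y : 'M[int]_(2,n)) k : (row2 a b *m Y) ord0 k = a * Y j0 k + b * Y j1 k.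
Proof. by rewrite mxE sum2 !mxE. Qed.

Lemma dv_diag l d (z : 'rV[int]_2) :
  dv l (z *m diagm d) = (l %| z ord0 j0 * d`_0)%Z && (l %| z ord0 j1 * d`_1)%Z.
Proof.
apply/idP/andP => [/forallP h|[h0 h1]].
  have := h o0; have := h o1; rewrite !mxE !sum2 !mxE /= !mulr0n !mulr1n !mulr0 ?addr0 ?add0r.
  by move=> -> ->.
apply/forallP => k; rewrite mxE sum2 !mxE; apply: rpredD; rewrite mulrnAr; exact: rpredMn.
Qed.

Local Open Scope ring_scope.

Section Md.
Variable l' : nat.
Local Notation l := l'.+1.
Definition md (x : int) : 'I_l := inord `|(x %% l%:Z)%Z|%N.

Lemma md_val x : ((md x : nat) : int) = (x %% l%:Z)%Z.
Proof.
have h0 : 0 <= (x %% l%:Z)%Z by apply: modz_ge0.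
have h1 : (x %% l%:Z)%Z < l%:Z by apply: ltz_pmod.
rewrite /md inordK; first by rewrite gez0_abs.
by rewrite -ltz_nat gez0_abs.
Qed.

Lemma dvd_md x d : (l%:Z %| x * d)%Z = (l%:Z %| (md x : nat)%:Z * d)%Z.
Proof.
rewrite md_val {1}(divz_eq x l%:Z) mulrDl -mulrA mulrC -mulrA.
by rewrite (rpredDl _ (dvdz_mulr _ (dvdzz _))) // mulrC.
Qed.

Lemma md_eq x y : md x = md y -> (l%:Z %| x - y)%Z.
Proof.
move=> h; rewrite -eqz_mod_dvd; apply/eqP.
by rewrite -!md_val h.
Qed.

Lemma ord_dvd_eq (u v : 'I_l) : (l%:Z %| u%:Z - v%:Z)%Z -> u = v.
Proof.
rewrite dvdzE => h; apply: val_inj => /=.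
have hl : (`|u%:Z - v%:Z|%N < l)%N.
  rewrite -ltz_nat; have := ltn_ord u; have := ltn_ord v.
  rewrite -!ltz_nat /= => hv hu. rewrite abszE.
  have hu0 : 0 <= u%:Z by []. have hv0 : 0 <= v%:Z by [].
  by rewrite ltr_norml; apply/andP; split; lra.
have : `|u%:Z - v%:Z|%N = 0%N.
  move: h hl; case: (`|u%:Z - v%:Z|%N) => // n h1 h2.
  by have := dvdn_leq (ltn0Sn n) h1; rewrite /= leqNgt h2.
by move/eqP; rewrite absz_eq0 subr_eq0 => /eqP [].
Qed.
End Md.

Lemma dvdz_absr (c x : int) : (c %| `|x|%N%:Z)%Z = (c %| x)%Z.
Proof. by rewrite !dvdzE. Qed.
Lemma dvdz_absl (c x : int) : (`|c|%N%:Z %| x)%Z = (c %| x)%Z.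
Proof. by rewrite !dvdzE. Qed.

Lemma ord2_cases (k : 'I_2) : k = j0 \/ k = j1.
Proof.
case: k => [[|[|n]] h]; [left | right | by []]; exact: val_inj.
Qed.

Lemma sum_prod_sep (n : nat) (a b : 'I_n -> nat) :
  (\sum_(u < n) \sum_(v < n) a u * b v = (\sum_(u < n) a u) * (\sum_(v < n) b v))%N.
Proof. by rewrite big_distrl; apply: eq_bigr => u _; rewrite big_distrr. Qed.

Lemma kernel_count (l' : nat) (X : 'M[int]_(2,4)) (g : int) :
  g != 0 -> (g %| l'.+1%:Z)%Z -> isg X g ->
  (\sum_(u < l'.+1) \sum_(v < l'.+1)
     ([forall k, (l'.+1%:Z %| (u%:Z * X j0 k + v%:Z * X j1 k)%R)%Z] : nat))%N = `|g|%N.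
Proof.
set l := l'.+1 => g0 gl [gge0 cdg gmax].
have [L Lu [R Ru [d _ hX]]] := int_Smith_normal_form X.
rewrite -/(diagm d) in hX.
set D := diagm d in hX.
have hD : D = invmx L *m X *m invmx R.
  by rewrite hX mulmxA mulmxK // mulKmx.
have cdXD c : cd X c <-> cd D c.
  split=> h; first by rewrite hD; apply: cdR; apply: cdL.
  by rewrite hX; apply: cdR; apply: cdL.
have g_d : g = `|d`_0 * d`_1|%:Z.
  apply: dvdz_anti_ge0 => //.
    by rewrite dvdz_absr; apply/cdDm/cdXD.
  rewrite dvdz_absl; apply: gmax; apply/cdXD/cdDm; exact: dvdzz.
have d01 : d`_0 * d`_1 != 0 by move: g0; rewrite g_d; apply: contra => /eqP->.
have d0nz : d`_0 != 0 by move: d01; rewrite mulf_eq0 negb_or => /andP[].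
have d1nz : d`_1 != 0 by move: d01; rewrite mulf_eq0 negb_or => /andP[].
have d0l : (d`_0 %| l%:Z)%Z.
  by apply: dvdz_trans gl; rewrite g_d dvdz_absr dvdz_mulr.
have d1l : (d`_1 %| l%:Z)%Z.
  by apply: dvdz_trans gl; rewrite g_d dvdz_absr dvdz_mull.
have cond (a b : int) : [forall k, (l%:Z %| (a * X j0 k + b * X j1 k)%R)%Z] =
   (l%:Z %| (a * L j0 j0 + b * L j1 j0) * d`_0)%Z &&
   (l%:Z %| (a * L j0 j1 + b * L j1 j1) * d`_1)%Z.
  have e1 : [forall k, (l%:Z %| (a * X j0 k + b * X j1 k)%R)%Z] = dv l%:Z (row2 a b *m X).
    by apply: eq_forallb => k; rewrite row2_mul.
  have e2 : dv l%:Z (row2 a b *m X) = dv l%:Z ((row2 a b *m L) *m D).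
    apply/idP/idP => h.
      have -> : (row2 a b *m L) *m D = (row2 a b *m X) *m invmx R.
        by rewrite hX !mulmxA mulmxK.
      exact: dv_mul.
    by rewrite hX !mulmxA; apply: dv_mul.
  by rewrite e1 e2 dv_diag !row2_mul.
rewrite (eq_bigr (fun u : 'I_l => \sum_(v < l)
   (((l%:Z %| (md l' (u%:Z * L j0 j0 + v%:Z * L j1 j0) : nat)%:Z * d`_0)%Z &&
    (l%:Z %| (md l' (u%:Z * L j0 j1 + v%:Z * L j1 j1) : nat)%:Z * d`_1)%Z) : nat))); last first.
  by move=> u _; apply: eq_bigr => v _; rewrite cond -!dvd_md.
set G := fun (p : 'I_l * 'I_l) =>
  (((l%:Z %| (p.1 : nat)%:Z * d`_0)%Z && (l%:Z %| (p.2 : nat)%:Z * d`_1)%Z) : nat).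
set phi := fun (p : 'I_l * 'I_l) =>
  (md l' (p.1%:Z * L j0 j0 + p.2%:Z * L j1 j0), md l' (p.1%:Z * L j0 j1 + p.2%:Z * L j1 j1)).
have phiinj : injective phi.
  move=> [u v] [u' v'] /= [] /md_eq h1 /md_eq h2.
  have hdv : dv l%:Z (row2 (u%:Z - u'%:Z) (v%:Z - v'%:Z) *m L).
    apply/forallP => k; rewrite row2_mul.
    have -> : (u%:Z - u'%:Z) * L j0 k + (v%:Z - v'%:Z) * L j1 k =
      (u%:Z * L j0 k + v%:Z * L j1 k) - (u'%:Z * L j0 k + v'%:Z * L j1 k) by ring.
    by case: (ord2_cases k) => ->.
  have hdv2 := dv_mul (invmx L) hdv.
  rewrite mulmxK // in hdv2; move/forallP: hdv2 => hdv2.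
  have := hdv2 j0; have := hdv2 j1; rewrite !mxE /= => /ord_dvd_eq -> /ord_dvd_eq -> //.
transitivity (\sum_(p : 'I_l * 'I_l) G (phi p))%N.
  by rewrite pair_bigA; apply: eq_bigr => [[u v]] _.
rewrite [RHS](_ : _ = \sum_(p : 'I_l * 'I_l) G p)%N.
  by rewrite [RHS](reindex_inj phiinj).
rewrite -(pair_bigA _ (fun u v => G (u, v))) /= /G.
under eq_bigr => u _ do under eq_bigr => v _ do rewrite -mulnb.
rewrite /= (sum_prod_sep (fun u : 'I_l => ((l%:Z %| (u%:Z * d`_0)%R)%Z : nat))
   (fun v : 'I_l => ((l%:Z %| (v%:Z * d`_1)%R)%Z : nat))).
by rewrite !count_dvd_int // g_d abszM.
Qed.

Local Close Scope ring_scope.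

Section Fib.
Variables (I A B : finType).
Definition prj (z : {ffun I -> option (A * B)}) : {ffun I -> option B} := [ffun i => omap snd (z i)].
Definition wt (o : option B) : nat := if o is Some _ then #|A| else 1.

Lemma fiber_card (z : {ffun I -> option B}) :
  #|[pred z' | prj z' == z]| = \prod_i wt (z i).
Proof.
rewrite (@eq_card _ _ (family (fun i => [pred o | omap snd o == z i]))); last first.
  move=> z'; rewrite !inE; apply/eqP/familyP => [<- i|h]; first by rewrite ffunE inE.
  by apply/ffunP => i; rewrite ffunE; apply/eqP; exact: (h i).
rewrite card_family foldrE big_map big_enum /=; apply: eq_bigr => i _.
case: (z i) => [b|] /=.
  have inj : injective (fun a : A => Some (a, b)) by move=> a1 a2 [].
  rewrite -(card_codom inj); apply: eq_card => -[[a b']|] /=; last first.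
    rewrite [in LHS]unfold_in /=.
    by apply/esym/negbTE; apply/codomP => -[a].
  rewrite [in LHS]unfold_in /=.
  apply/eqP/codomP => [[->]|[a' [_ ->]]] //; by exists a.
rewrite (@eq_card _ _ (pred1 None)) ?card1 //.
by move=> [[a b']|] /=; rewrite [in LHS]unfold_in !inE.
Qed.
Lemma sum_prj (F : {ffun I -> option B} -> nat) :
  (\sum_(z' : {ffun I -> option (A * B)}) F (prj z') = \sum_z F z * \prod_i wt (z i))%N.
Proof.
rewrite (partition_big prj xpredT) //=; apply: eq_bigr => z _.
rewrite (eq_bigr (fun _ => F z)); last by move=> z' /eqP->.
rewrite sum_nat_const -fiber_card mulnC; congr (_ * _)%N.

Qed.
End Fib.

Local Open Scope ring_scope.

Local Close Scope ring_scope.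

Lemma sum4 (V : nmodType) (F : 'I_4 -> V) : (\sum_(i < 4) F i = F o0 + F o1 + F o2 + F o3)%R.
Proof.
rewrite !big_ord_recr big_ord0 /= GRing.add0r.

congr (F _ + F _ + F _ + F _)%R; apply: val_inj => //.
Qed.

Lemma sum4n (F : 'I_4 -> nat) : (\sum_(i < 4) F i = F o0 + F o1 + F o2 + F o3)%N.
Proof. exact: (@sum4 nat). Qed.

Lemma forall4 (P : 'I_4 -> bool) : [forall k, P k] = [&& P o0, P o1, P o2 & P o3].
Proof.
apply/forallP/and4P => [h|[h0 h1 h2 h3] k]; first by split; apply: h.
case: k => [[|[|[|[|n]]]] hk] //.
- by rewrite (_ : Ordinal hk = o0) //; apply: val_inj.
- by rewrite (_ : Ordinal hk = o1) //; apply: val_inj.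
- by rewrite (_ : Ordinal hk = o2) //; apply: val_inj.
- by rewrite (_ : Ordinal hk = o3) //; apply: val_inj.
Qed.

Lemma pat1 (b : 'I_4 -> bool) :
  (((\sum_i (b i : nat)) == 1)%N : nat) = (\sum_i ([forall k, b k == (k == i)] : nat))%N.
Proof.
rewrite !sum4n !forall4 /= -!val_eqE /=.
by case: (b o0); case: (b o1); case: (b o2); case: (b o3).
Qed.

Lemma pat2 (b : 'I_4 -> bool) :
  (((\sum_i (b i : nat)) == 2)%N : nat) =
  (\sum_(i < 4) \sum_(j < 4 | (i < j)%N) ([forall k, b k == ((k == i) || (k == j))] : nat))%N.
Proof.
rewrite [RHS](eq_bigr (fun i : 'I_4 => \sum_(j < 4)
   (if (i < j)%N then ([forall k, b k == ((k == i) || (k == j))] : nat) else 0%N)));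
  last by move=> i _; rewrite big_mkcond.
rewrite !sum4n /= !forall4 /= -!val_eqE /=.
by case: (b o0); case: (b o1); case: (b o2); case: (b o3).
Qed.

Local Open Scope ring_scope.

Local Close Scope ring_scope.

Section Pat.
Variable T : finType.
Local Notation Z := {ffun 'I_4 -> option T}.

Definition singz (i : 'I_4) (a : T) : Z := [ffun k => if k == i then Some a else None].
Definition pairz (i j : 'I_4) (a b : T) : Z :=
  [ffun k => if k == i then Some a else if k == j then Some b else None].

Lemma sum_mul_pred1 (U : finType) (q : U) (G : U -> nat) :
  (\sum_(u : U) (u == q : nat) * G u = G q)%N.
Proof.
rewrite (bigD1 q) //= eqxx mul1n big1 ?addn0 // => u /negbTE ->; exact: mul0n.
Qed.

Lemma sum_pat1 (G : Z -> nat) i :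
  (\sum_(z : Z) ([forall k, (z k != None) == (k == i)] : nat) * G z =
   \sum_(a : T) G (singz i a))%N.
Proof.
have key (z : Z) : ([forall k, (z k != None) == (k == i)] : nat) =
    (\sum_(a : T) (z == singz i a : nat))%N.
  case: (boolP [forall k, _]) => [/forallP h|h].
    have := h i; rewrite eqxx; case E: (z i) => [a0|] // _.
    rewrite (bigD1 a0) //= big1 ?addn0.
      suff -> : z == singz i a0 by [].
      apply/eqP/ffunP => k; rewrite ffunE; case: ifP => [/eqP -> //|ki].
      by have := h k; rewrite ki; case: (z k).
    move=> a /negbTE ha; apply/eqP; rewrite eqb0; apply/eqP => ez.
    by move: E; rewrite ez ffunE eqxx => -[ea]; rewrite ea eqxx in ha.
  rewrite big1 // => a _; apply/eqP; rewrite eqb0; apply/eqP => ez.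
  move/negP: h; apply; apply/forallP => k; rewrite ez ffunE.
  by case: (k == i).
rewrite (eq_bigr (fun z => \sum_(a : T) (z == singz i a : nat) * G z)%N); last first.
  by move=> z _; rewrite key big_distrl.
rewrite exchange_big /=; apply: eq_bigr => a _.
by rewrite sum_mul_pred1.
Qed.

Lemma sum_pat2 (G : Z -> nat) i j : i != j ->
  (\sum_(z : Z) ([forall k, (z k != None) == ((k == i) || (k == j))] : nat) * G z =
   \sum_(a : T) \sum_(b : T) G (pairz i j a b))%N.
Proof.
move=> ij.
have key (z : Z) : ([forall k, (z k != None) == ((k == i) || (k == j))] : nat) =
    (\sum_(p : T * T) (z == pairz i j p.1 p.2 : nat))%N.
  case: (boolP [forall k, _]) => [/forallP h|h].
    have := h i; rewrite eqxx; case E: (z i) => [a0|] // _.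
    have := h j; rewrite eqxx orbT; case E2: (z j) => [b0|] // _.
    rewrite (bigD1 (a0, b0)) //= big1 ?addn0.
      suff -> : z == pairz i j a0 b0 by [].
      apply/eqP/ffunP => k; rewrite ffunE; case: ifP => [/eqP -> //|ki].
      case: ifP => [/eqP -> //|kj].
      by have := h k; rewrite ki kj; case: (z k).
    move=> [a b] /negbTE hab; apply/eqP; rewrite eqb0; apply/eqP => ez.
    move: E E2; rewrite ez !ffunE eqxx eq_sym (negbTE ij) eqxx /=.
    by move=> [ea] [eb]; rewrite ea eb eqxx in hab.
  rewrite big1 // => p _; apply/eqP; rewrite eqb0; apply/eqP => ez.
  move/negP: h; apply; apply/forallP => k; rewrite ez ffunE.
  by case: (k == i) => //=; case: (k == j).
rewrite (eq_bigr (fun z => \sum_(p : T * T) (z == pairz i j p.1 p.2 : nat) * G z)%N); last first.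
  by move=> z _; rewrite key big_distrl.
rewrite exchange_big /= -(pair_bigA _ (fun a b => \sum_z (z == pairz i j a b : nat) * G z)%N) /= /=; apply: eq_bigr => a _; apply: eq_bigr => b _.
by rewrite sum_mul_pred1.
Qed.
End Pat.

Local Open Scope ring_scope.

Local Open Scope ring_scope.

Lemma sq_dvd (a b : int) : (a * a %| b * b)%Z -> (a %| b)%Z.
Proof.
rewrite !dvdzE !abszM !mulnn.
by rewrite dvdn_pexp2r.
Qed.

Lemma dvdzD' (d m n : int) : (d %| m)%Z -> (d %| n)%Z -> (d %| m + n)%Z.
Proof. by move=> h1 h2; rewrite rpredD. Qed.

Lemma shift_sumN (l : nat) (f : int -> nat) : (0 < l)%N -> f l%:Z = f 0 ->
  (\sum_(u < l) f (u%:Z + 1)%R)%N = (\sum_(u < l) f u%:Z)%N.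
Proof.
case: l => // l _ hf.
rewrite big_ord_recr big_ord_recl /= -hf addnC; congr (_ + _)%N.
  by rewrite -addn1 PoszD.
by apply: eq_bigr => i _; rewrite /bump /= addnC PoszD.
Qed.

Section Orth.
Variables (l' : nat) (r : 'M[int]_4).
Local Notation l := l'.+1.
Hypothesis horth : forall i j : 'I_4, \sum_(k < 4) r i k * r j k = (i == j)%:R * l%:R.

Definition rowsX (i j : 'I_4) : 'M[int]_(2,4) :=
  \matrix_(a, k) (if a == j0 then r i k else r j k).

Lemma mn_rowsX i j k m : mn (rowsX i j) k m = minor2 r i j k m.
Proof. by rewrite /mn /minor2 !mxE. Qed.

Lemma isg_zeta i j : isg (rowsX i j) (zeta r i j).
Proof.
split; first exact: foldr_gcd_ge0.
  move=> k m; rewrite mn_rowsX.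
  case: (ltngtP k m) => [km|mk|/val_inj ->].
  - apply: foldr_gcd_dvd; apply: (map_f (fun kl : 'I_4 * 'I_4 => minor2 r i j kl.1 kl.2) (x := (k, m))).
    by rewrite mem_filter /= km; apply: allpairs_f; rewrite mem_enum.
  - have -> : minor2 r i j k m = - minor2 r i j m k by rewrite /minor2; ring.
    rewrite rpredN; apply: foldr_gcd_dvd.
    apply: (map_f (fun kl : 'I_4 * 'I_4 => minor2 r i j kl.1 kl.2) (x := (m, k))).
    by rewrite mem_filter /= mk; apply: allpairs_f; rewrite mem_enum.
  - by rewrite /minor2 subrr dvdz0.
move=> c hc; apply: foldr_gcd_greatest => x /mapP [[k m] _ ->] /=.
by rewrite -mn_rowsX.
Qed.

Lemma lagrange (i j : 'I_4) :
  (\sum_k r i k * r i k) * (\sum_k r j k * r j k) - (\sum_k r i k * r j k) ^+ 2 =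
  minor2 r i j o0 o1 ^+ 2 + minor2 r i j o0 o2 ^+ 2 + minor2 r i j o0 o3 ^+ 2 +
  minor2 r i j o1 o2 ^+ 2 + minor2 r i j o1 o3 ^+ 2 + minor2 r i j o2 o3 ^+ 2.
Proof. rewrite !sum4 /minor2; ring. Qed.

Lemma lnz : (l%:R : int) != 0.
Proof. by rewrite pnatr_eq0. Qed.

Lemma zeta_props i j : i != j -> zeta r i j != 0 /\ (zeta r i j %| l%:R)%Z.
Proof.
move=> ij; have [_ cdz _] := isg_zeta i j.
have dm k m : (zeta r i j %| minor2 r i j k m)%Z by rewrite -mn_rowsX; apply: cdz.
have lag := lagrange i j.
rewrite !horth !eqxx (negbTE ij) !mul1r mul0r expr0n /= subr0 in lag.
have hsq0 : (zeta r i j * zeta r i j %|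
  minor2 r i j o0 o1 ^+ 2 + minor2 r i j o0 o2 ^+ 2 + minor2 r i j o0 o3 ^+ 2 +
  minor2 r i j o1 o2 ^+ 2 + minor2 r i j o1 o3 ^+ 2 + minor2 r i j o2 o3 ^+ 2)%Z.
  by repeat apply: dvdzD'; rewrite expr2; apply: dvdz_mul.
have hsq : (zeta r i j * zeta r i j %| l%:R * l%:R)%Z by rewrite lag.
split; last exact: sq_dvd.
apply/negP => /eqP z0; move: hsq; rewrite z0 mul0r dvd0z mulf_eq0 orbb.
by rewrite (negbTE lnz).
Qed.

Lemma Dgcd_dvd i k : (Dgcd r i %| r i k)%Z.
Proof. by apply: foldr_gcd_dvd; apply: map_f; rewrite mem_enum. Qed.

Lemma Dgcd_props i : Dgcd r i != 0 /\ (Dgcd r i %| l%:R)%Z.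
Proof.
have h := horth i i; rewrite eqxx mul1r in h.
have hd : (Dgcd r i * Dgcd r i %| l%:R)%Z.
  by rewrite -h; apply: rpred_sum => k _; apply: dvdz_mul; apply: Dgcd_dvd.
split; last exact: dvdz_trans (dvdz_mulr _ (dvdzz _)) hd.
apply/negP => /eqP z0; move: hd; rewrite z0 mul0r dvd0z.
by rewrite (negbTE lnz).
Qed.

Lemma zeta_props' i j : i != j -> zeta r i j != 0 /\ (zeta r i j %| l%:Z)%Z.
Proof. by rewrite -natz; apply: zeta_props. Qed.

Lemma Dgcd_props' i : Dgcd r i != 0 /\ (Dgcd r i %| l%:Z)%Z.
Proof. by rewrite -natz; apply: Dgcd_props. Qed.

Lemma single_count i :
  (\sum_(u < l) ([forall k, (l%:Z %| ((u%:Z + 1) * r i k)%R)%Z] : nat))%N = `|Dgcd r i|%N.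
Proof.
have [D0 Dl] := Dgcd_props' i.
rewrite (shift_sum (f := fun x => [forall k, (l%:Z %| x * r i k)%Z])) //; last first.
  by apply: eq_forallb => k; rewrite mul0r dvdz0 dvdz_mulr.
rewrite -(count_dvd_int (ltn0Sn l') D0 Dl); apply: eq_bigr => u _.
congr nat_of_bool; apply/forallP/idP => [h|h k].
  have := foldr_gcd_mul [seq r i k | k <- enum 'I_4] u%:Z.
  rewrite -map_comp /= => e; rewrite -[u%:Z]/(`|u%:Z|%N%:Z) -e.
  by apply: foldr_gcd_greatest => x /mapP [k _ ->]; apply: h.
by apply: dvdz_trans h _; apply: dvdz_mul (dvdzz _) (Dgcd_dvd _ _).
Qed.

Lemma pair_count i j : i != j ->
  (\sum_(u < l) \sum_(v < l)
     ([forall k, (l%:Z %| ((u%:Z + 1) * r i k + (v%:Z + 1) * r j k)%R)%Z] : nat))%N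
  = `|zeta r i j|%N.
Proof.
move=> ij; have [z0 zl] := zeta_props' ij.
rewrite -(kernel_count z0 zl (isg_zeta i j)).
transitivity (\sum_(u < l) \sum_(v < l)
     ([forall k, (l%:Z %| ((u%:Z + 1) * r i k + v%:Z * r j k)%R)%Z] : nat))%N.
  apply: eq_bigr => u _.
  rewrite (shift_sum (f := fun x => [forall k, (l%:Z %| ((u%:Z + 1) * r i k + x * r j k)%R)%Z])) //.
  apply: eq_forallb => k; rewrite mul0r addr0.
  by rewrite (rpredDr _ (dvdz_mulr _ (dvdzz _))).
rewrite (shift_sumN (f := fun x => \sum_(v < l)
     ([forall k, (l%:Z %| (x * r i k + v%:Z * r j k)%R)%Z] : nat))%N) //; last first.
  apply: eq_bigr => v _; congr nat_of_bool; apply: eq_forallb => k; rewrite mul0r add0r.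
  by rewrite (rpredDl _ (dvdz_mulr _ (dvdzz _))).
apply: eq_bigr => u _; apply: eq_bigr => v _; congr nat_of_bool.
by apply: eq_forallb => k; rewrite !mxE.
Qed.
End Orth.

Local Open Scope ring_scope.

Section Count.
Variables (l' : nat) (r : 'M[int]_4).
Local Notation l := l'.+1.
Hypothesis horth : forall i j : 'I_4, \sum_(k < 4) r i k * r j k = (i == j)%:R * l%:R.
Local Notation Z := {ffun 'I_4 -> option 'I_l}.

Definition vo (o : option 'I_l) : int := if o is Some a then a%:Z + 1 else 0.
Definition Q (z : Z) : bool := [forall k, (l%:Z %| \sum_i vo (z i) * r i k)%Z].
Definition somes (z : Z) : nat := (\sum_i ((z i != None) : nat))%N.

Lemma Q_singz i a : Q (singz i a) = [forall k, (l%:Z %| ((a%:Z + 1) * r i k)%R)%Z].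
Proof.
apply: eq_forallb => k; rewrite (bigD1 i) //= big1 ?addr0; first by rewrite ffunE eqxx.
by move=> m mi; rewrite ffunE (negbTE mi) mul0r.
Qed.

Lemma Q_pairz i j a b : i != j -> Q (pairz i j a b) =
  [forall k, (l%:Z %| ((a%:Z + 1) * r i k + (b%:Z + 1) * r j k)%R)%Z].
Proof.
move=> ij; apply: eq_forallb => k; rewrite (bigD1 i) //= (bigD1 j) /=; last by rewrite eq_sym.
rewrite big1 ?addr0; first by rewrite !ffunE eqxx eq_sym (negbTE ij) eqxx.
by move=> m /andP[mi mj]; rewrite ffunE (negbTE mi) (negbTE mj) mul0r.
Qed.

Lemma count1 : (\sum_(z : Z) (Q z : nat) * ((somes z == 1)%N : nat))%N =
  (\sum_(i < 4) `|Dgcd r i|%N)%N.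
Proof.
rewrite (eq_bigr (fun z : Z => \sum_(i < 4) ([forall k, (z k != None) == (k == i)] : nat) * Q z)%N);
  last by move=> z _; rewrite /somes (pat1 (fun k => z k != None)) mulnC big_distrl.
rewrite exchange_big /=; apply: eq_bigr => i _.
rewrite (sum_pat1 (fun z => (Q z : nat))) -(single_count horth i).
by apply: eq_bigr => a _; rewrite Q_singz.
Qed.

Lemma count2 : (\sum_(z : Z) (Q z : nat) * ((somes z == 2)%N : nat))%N =
  (\sum_(i < 4) \sum_(j < 4 | (i < j)%N) `|zeta r i j|%N)%N.
Proof.
rewrite (eq_bigr (fun z : Z => \sum_(i < 4) \sum_(j < 4 | (i < j)%N)
   ([forall k, (z k != None) == ((k == i) || (k == j))] : nat) * Q z)%N); last first.
  move=> z _; rewrite /somes (pat2 (fun k => z k != None)) mulnC big_distrl.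
  by apply: eq_bigr => i _; rewrite big_distrl.
rewrite exchange_big /=; apply: eq_bigr => i _.
rewrite exchange_big /=; apply: eq_bigr => j ij.
have ij' : i != j by rewrite neq_ltn ij.
rewrite (sum_pat2 (fun z => (Q z : nat)) ij') -(pair_count horth ij').
by apply: eq_bigr => a _; apply: eq_bigr => b _; rewrite Q_pairz.
Qed.
End Count.

Local Open Scope ring_scope.

Section Geo.
Variables (l' : nat) (r : 'M[int]_4).
Local Notation l := l'.+1.
Hypothesis horth : forall i j : 'I_4, \sum_(k < 4) r i k * r j k = (i == j)%:R * l%:R.

Lemma col_orth k m : \sum_(i < 4) r i k * r i m = (k == m)%:R * l%:R.
Proof.
pose N : 'M[rat]_4 := map_mx (fun x : int => x%:~R) r.
have hN : N *m N^T = (l%:R : rat)%:M.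
  apply/matrixP => i j; rewrite !mxE.
  have := congr1 (fun x : int => x%:~R : rat) (horth i j).
  rewrite rmorph_sum /= => e.
  rewrite (eq_bigr (fun k => ((r i k * r j k)%:~R : rat))); last first.
    by move=> k' _; rewrite !mxE rmorphM.
  rewrite e rmorphM /= rmorph_nat.
  case: (i == j); rewrite /= ?mulr1n ?mulr0n ?rmorph1 ?rmorph0 ?mul1r ?mul0r ?natz. by []. by [].
have l0 : (l%:R : rat) != 0 by rewrite pnatr_eq0.
have h1 : N *m ((l%:R : rat)^-1 *: N^T) = 1%:M.
  by rewrite -scalemxAr hN scale_scalar_mx mulVf.
have h2 := mulmx1C h1.
have h3 : N^T *m N = (l%:R : rat)%:M.
  rewrite -scalemxAl in h2.
  have -> : N^T *m N = ((l%:R : rat) * (l%:R)^-1) *: (N^T *m N) by rewrite mulfV // scale1r.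
  by rewrite -scalerA h2 scalemx1.
apply: (@intr_inj rat).
have := congr1 (fun A : 'M[rat]_4 => A k m) h3; rewrite !mxE => e.
rewrite rmorph_sum /= (eq_bigr (fun i => N^T k i * N i m)); last first.
  by move=> i _; rewrite !mxE rmorphM.
rewrite e rmorphM /= rmorph_nat.
by case: (k == m); rewrite /= ?mulr1n ?mulr0n ?rmorph1 ?rmorph0 ?mul1r ?mul0r ?natz.
Qed.
End Geo.

Section Geo2.
Variables (l' t' : nat) (r : 'M[int]_4).
Local Notation l := l'.+1.
Local Notation t := t'.+1.
Hypothesis horth : forall i j : 'I_4, \sum_(k < 4) r i k * r j k = (i == j)%:R * l%:R.
Local Notation Z' := {ffun 'I_4 -> option ('I_t * 'I_l)}.

Definition yv (o : option ('I_t * 'I_l)) : int :=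
  if o is Some p then (p.1 * l + p.2 + 1)%N%:Z else 0.
Definition yx (x : 'rV[int]_4) (i : 'I_4) : int := \sum_k x ord0 k * r i k.
Definition xof (z : Z') : 'rV[int]_4 := \row_k ((\sum_i yv (z i) * r i k) %/ l%:Z)%Z.
Definition good (z : Z') : bool := Q r (prj z).

Lemma Q_yv z : good z = [forall k, (l%:Z %| \sum_i yv (z i) * r i k)%Z].
Proof.
apply: eq_forallb => k.
have -> : \sum_i yv (z i) * r i k = \sum_i vo (prj z i) * r i k +
   l%:Z * \sum_i (if z i is Some p then (p.1 : nat)%:Z else 0) * r i k.
  rewrite mulr_sumr -big_split /=; apply: eq_bigr => i _; rewrite ffunE.
  case: (z i) => [[q a]|] /=; last by rewrite !mul0r mulr0 addr0.
  rewrite !PoszD PoszM; ring.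
by rewrite rpredDr // dvdz_mulr.
Qed.

Lemma good_sum z k : good z -> \sum_i yv (z i) * r i k = l%:Z * xof z ord0 k.
Proof.
rewrite Q_yv => /forallP /(_ k) h; rewrite mxE mulrC divzK //.
Qed.

Lemma good_yx z j : good z -> yx (xof z) j = yv (z j).
Proof.
move=> gz; apply: (@mulfI _ (l%:Z)); first by [].
rewrite /yx mulr_sumr.
rewrite (eq_bigr (fun k => (\sum_i yv (z i) * r i k) * r j k)); last first.
  by move=> k _; rewrite mulrA -good_sum.
under eq_bigr => k _ do rewrite mulr_suml.
rewrite exchange_big /=.
rewrite (eq_bigr (fun i => yv (z i) * ((i == j)%:R * l%:R))); last first.
  by move=> i _; rewrite -horth mulr_sumr; apply: eq_bigr => k _; rewrite mulrA.
rewrite (bigD1 j) //= big1 ?addr0; first by rewrite eqxx mul1r mulrC natz.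
by move=> i /negbTE ->; rewrite mul0r mulr0.
Qed.

Lemma yv_inj : injective yv.
Proof.
move=> [[q a]|] [[q' a']|] //= [e]; last 2 first.
- by rewrite addn1 in e.
- by rewrite addn1 in e.
move/addIn: e => e.
have hq : (q : nat) = q'.
  by have := congr1 (fun n => n %/ l)%N e; rewrite !divnMDl // !divn_small ?addn0.
have ha : (a : nat) = a'.
  by have := congr1 (fun n => n %% l)%N e; rewrite !modnMDl !modn_small.
by congr Some; congr pair; apply: val_inj.
Qed.

Lemma yv_range o : 0 <= yv o <= (t * l)%N%:Z.
Proof.
case: o => [[q a]|] //=; rewrite !lez_nat /=.
have := ltn_ord q; have := ltn_ord a.
rewrite -[(q * l + a + 1)%N]addnA addn1 => ha hq.
apply: (@leq_trans (q * l + l)); first by rewrite leq_add2l.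
by rewrite addnC -mulSn leq_mul2r hq orbT.
Qed.

Definition mkz (y : int) : option ('I_t * 'I_l) :=
  match y with Posz n.+1 => Some (inord (n %/ l), inord (n %% l)) | _ => None end.

Lemma yv_mkz y : 0 <= y <= (t * l)%N%:Z -> yv (mkz y) = y.
Proof.
case: y => [[|n]|] //= hn.
have hq : (n %/ l < t)%N by rewrite ltn_divLR.
have ha : (n %% l < l)%N by rewrite ltn_mod.
by rewrite /= !inordK // -divn_eq addn1.
Qed.

Lemma int_char x : (exists z, good z /\ xof z = x) <-> (forall i, 0 <= yx x i <= (t * l)%N%:Z).
Proof.
split=> [[z [gz <-]] i|h]; first by rewrite good_yx //; apply: yv_range.
pose z : Z' := [ffun i => mkz (yx x i)].
have hz i : yv (z i) = yx x i by rewrite ffunE yv_mkz.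
have hs k : \sum_i yv (z i) * r i k = l%:Z * x ord0 k.
  under eq_bigr => i _ do rewrite hz /yx mulr_suml.
  rewrite exchange_big /=.
  rewrite (eq_bigr (fun m => x ord0 m * ((m == k)%:R * l%:R))); last first.
    by move=> m _; rewrite -(col_orth horth) mulr_sumr; apply: eq_bigr => i _; rewrite mulrA.
  rewrite (bigD1 k) //= big1 ?addr0; first by rewrite eqxx mul1r mulrC natz.
  by move=> m /negbTE ->; rewrite mul0r mulr0.
have gz : good z by rewrite Q_yv; apply/forallP => k; rewrite hs dvdz_mulr.
exists z; split => //; apply/rowP => k; rewrite mxE hs mulrC mulzK //.
Qed.

Lemma seq_count (P : 'rV[int]_4 -> Prop) n :
  (forall x, P x <-> forall i, 0 <= yx x i <= (t * l)%N%:Z) ->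
  (exists s : seq 'rV[int]_4, uniq s /\ (forall x, x \in s <-> P x) /\ size s = n) ->
  n = #|[pred z : Z' | good z]|.
Proof.
move=> hP [s [us [hs <-]]].
pose S := [seq xof z | z <- enum [pred z : Z' | good z]].
have uS : uniq S.
  rewrite map_inj_in_uniq ?enum_uniq // => z1 z2; rewrite !mem_enum !inE => g1 g2 e.
  apply/ffunP => i; apply: yv_inj; rewrite -!good_yx //; by rewrite e.
have -> : #|[pred z : Z' | good z]| = size S by rewrite size_map -cardE.
apply: perm_size; apply: uniq_perm => // x.
apply/idP/idP => [/hs /hP /int_char [z [gz <-]]|/mapP [z]].
  by apply: map_f; rewrite mem_enum.
rewrite mem_enum inE => gz ->; apply/hs/hP/int_char; by exists z.
Qed.
End Geo2.

Local Open Scope ring_scope.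

Lemma poly_eq_nat (p q : {poly rat}) : (forall t', p.[t'.+1%:R] = q.[t'.+1%:R]) -> p = q.
Proof.
move=> h; apply/eqP; rewrite -subr_eq0; apply/negPn/negP => nz.
pose rs := [seq (i.+1)%:R : rat | i <- iota 0 (size (p - q))].
have hall : all (root (p - q)) rs.
  by apply/allP => x /mapP [i _ ->]; rewrite /root !hornerE h subrr.
have hu : uniq rs.
  by rewrite map_inj_uniq ?iota_uniq // => i j /eqP; rewrite eqr_nat => /eqP [].
by have := max_poly_roots nz hall hu; rewrite size_map size_iota ltnn.
Qed.

Section Poly.
Variables (l' : nat) (r : 'M[int]_4).
Local Notation l := l'.+1.
Local Notation Z := {ffun 'I_4 -> option 'I_l}.

Definition pz : {poly rat} := \sum_(z : Z) (Q r z : nat)%:R *: 'X^(somes z).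

Lemma pz_coef k : pz`_k = ((\sum_(z : Z) (Q r z : nat) * ((somes z == k)%N : nat))%N)%:R.
Proof.
rewrite coef_sum natr_sum; apply: eq_bigr => z _.
by rewrite coefZ coefXn natrM eq_sym.
Qed.

Lemma pz_eval t' : pz.[t'.+1%:R] = (#|[pred z : {ffun 'I_4 -> option ('I_t'.+1 * 'I_l)} | good r z]|)%:R.
Proof.
rewrite -sum1_card big_mkcond /=.
rewrite (eq_bigr (fun z => (Q r (prj z) : nat))); last first.
  by move=> z _; rewrite inE /good; case: (Q r _).
rewrite (@sum_prj _ 'I_t'.+1 _ (fun z : Z => (Q r z : nat))) natr_sum horner_sum.
apply: eq_bigr => z _.
rewrite hornerZ hornerXn natrM natr_prod; congr (_ * _).
rewrite /somes -prodrXr; apply: eq_bigr => i _.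
by case: (z i) => [a|] /=; rewrite ?card_ord ?expr1 ?expr0.
Qed.
End Poly.

Local Open Scope ring_scope.

Section Real.
Variables (R : realType) (l' t' : nat) (r : 'M[int]_4).
Local Notation l := l'.+1.
Local Notation t := t'.+1.
Hypothesis horth : forall i j : 'I_4, \sum_(k < 4) r i k * r j k = (i == j)%:R * l%:R.

Lemma yx_back x k : \sum_i yx r x i * r i k = l%:Z * x ord0 k.
Proof.
under eq_bigr => i _ do rewrite /yx mulr_suml.
rewrite exchange_big /=.
rewrite (eq_bigr (fun m => x ord0 m * ((m == k)%:R * l%:R))); last first.
  by move=> m _; rewrite -(col_orth horth) mulr_sumr; apply: eq_bigr => i _; rewrite mulrA.
rewrite (bigD1 k) //= big1 ?addr0; first by rewrite eqxx mul1r mulrC natz.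
by move=> m /negbTE ->; rewrite mul0r mulr0.
Qed.

Lemma orthR i j : \sum_k (r j k)%:~R * (r i k)%:~R = ((j == i)%:R * l%:R : R).
Proof.
have := congr1 (fun z : int => (z%:~R : R)) (horth j i).
rewrite rmorph_sum rmorphM /= !rmorph_nat => <-.
by apply: eq_bigr => k _; rewrite rmorphM.
Qed.

Lemma geo x : in_dilate R r t x <-> (forall i, 0 <= yx r x i <= (t * l)%N%:Z).
Proof.
split=> [[s [hs hx]] i|h].
  have e : (yx r x i)%:~R = (t%:R * l%:R * s i : R).
    rewrite /yx rmorph_sum /=.
    under eq_bigr => k _ do rewrite rmorphM /= hx -mulrA mulr_suml mulr_sumr.
    rewrite exchange_big /=.
    rewrite (eq_bigr (fun j => t%:R * s j * ((j == i)%:R * l%:R) : R)); last first.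
      move=> j _; rewrite -orthR mulr_sumr; apply: eq_bigr => k _.
      by rewrite !mulrA.
    rewrite (bigD1 i) //= big1 ?addr0; first by rewrite eqxx mul1r; ring.
    by move=> j /negbTE ->; rewrite mul0r mulr0.
  have [s0 s1] := andP (hs i).
  have tl0 : (0 : R) <= t%:R * l%:R by rewrite mulr_ge0 ?ler0n.
  apply/andP; split.
    by rewrite -(ler_int R) e mulr_ge0.
  rewrite -(ler_int R) e PoszM rmorphM /=.
  by rewrite -[X in _ <= X]mulr1 ler_wpM2l.
pose s i : R := (yx r x i)%:~R / (t%:R * l%:R).
have tl0 : (0 : R) < t%:R * l%:R by rewrite mulr_gt0 ?ltr0Sn.
exists s; split.
  move=> i; have [h0 h1] := andP (h i).
  rewrite /s divr_ge0 ?ler0z //= ?(ltW tl0) // ler_pdivrMr // mul1r.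
  by move: h1; rewrite -(ler_int R) PoszM rmorphM /=.
move=> k.
have := congr1 (fun z : int => (z%:~R : R)) (yx_back x k).
rewrite rmorph_sum rmorphM /= => e.
have el : ((Posz l)%:~R : R) = l%:R by [].
rewrite /s.
have -> : \sum_i (yx r x i)%:~R / (t%:R * l%:R) * (r i k)%:~R =
    (t%:R * l%:R)^-1 * \sum_i (yx r x i)%:~R * (r i k)%:~R :> R.
  by rewrite mulr_sumr; apply: eq_bigr => i _; ring.
have ee : \sum_i (yx r x i)%:~R * (r i k)%:~R = (l%:R * (x ord0 k)%:~R : R).
  by rewrite -el -e; apply: eq_bigr => i _; rewrite rmorphM.
rewrite ee; field.
by rewrite !nat1r !pnatr_eq0.
Qed.
End Real.

Lemma nat_sum_cast (I : finType) (P : pred I) (F : I -> int) : (forall i, 0 <= F i) ->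
  ((\sum_(i | P i) `|F i|%N)%N%:R : rat) = (\sum_(i | P i) F i)%:~R.
Proof.
move=> h; rewrite natr_sum rmorph_sum; apply: eq_bigr => i _.
have -> : ((`|F i|%N)%:R : rat) = ((`|F i|%N%:Z)%:~R) by [].
by rewrite gez0_abs.
Qed.

Unset Implicit Arguments.
Theorem theorem2p17 (R : realType) (l : nat) (r : 'M[int]_4) (E : {poly rat}) :
  (0 < l)%N ->
  (forall i j : 'I_4, \sum_(k < 4) r i k * r j k = (i == j)%:R * l%:R) ->
  foldr gcdz 0 [seq Dgcd r i | i <- enum 'I_4] = 1 ->
  (forall t : nat, (0 < t)%N ->
     exists n : nat, has_card (in_dilate R r t) n /\ E.[t%:R] = n%:R) ->
  E`_2 = E`_1
         + (\sum_(i < 4) \sum_(j < 4 | (i < j)%N) zeta r i j)%:~R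
         - (\sum_(i < 4) Dgcd r i)%:~R.
Proof.
case: l => // l' _ horth _ hE.
have hEp : E = pz l' r.
  apply: poly_eq_nat => t'.
  have [n [hc hn]] := hE t'.+1 isT.
  rewrite hn pz_eval; congr (_%:R).
  exact: (seq_count horth (geo R t' horth) hc).
rewrite hEp !pz_coef (count2 horth) (count1 horth).
rewrite nat_sum_cast; last by move=> i; apply: foldr_gcd_ge0.
rewrite natr_sum.
rewrite (eq_bigr (fun i : 'I_4 => (\sum_(j < 4 | (i < j)%N) zeta r i j)%:~R)); last first.
  by move=> i _; rewrite nat_sum_cast // => j; apply: foldr_gcd_ge0.
rewrite -rmorph_sum /=.
by rewrite addrC addrA addNr add0r.
Qed.
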